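(* Let $n\ge 2$, $d_1,\ldots,d_n\in\mathbb{N}$, and let $d$ be a dependence measure, i.e. a map assigning a real number $d(X_1,\ldots,X_n)$ to random vectors $X_i=(X_{i,1},\ldots,X_{i,d_i})$ with values in $\mathbb{R}^{d_i}$, where $d(X_1,\ldots,X_n)$ depends only on the joint distribution of $(X_1,\ldots,X_n)$. Assume $d$ is translation invariant (i.e. $d(X_1+a_1,\ldots,X_n+a_n)=d(X_1,\ldots,X_n)$ for all constant vectors $a_i\in\mathbb{R}^{d_i}$) and symmetric in each element (i.e. the value of $d$ does not change if any single element $X_{i,k}$ is replaced by $-X_{i,k}$). Define $$d_{cop}(X_1,\ldots,X_n) := d\big(T_{X_1}(X_1,U_1),\ldots,T_{X_n}(X_n,U_n)\big),$$ where $T_{X_i}(X_i,U_i) := \big(T_{X_{i,1}}(X_{i,1},U_{i,1}),\ldots,T_{X_{i,d_i}}(X_{i,d_i},U_{i,d_i})\big)$, for a real random variable $Y$ we set $T_Y(y,u):=\mathbb{P}(Y<y)+u\,\mathbb{P}(Y=y)$, and the $U_{i,k}$ ($i=1,\ldots,n$, $k=1,\ldots,d_i$) are independent random variables uniformly distributed on $[0,1]$, independent of $(X_1,\ldots,X_n)$. Then for all strictly monotone (each either strictly increasing or strictly decreasing) functions $g_{i,k}:\mathbb{R}\to\mathbb{R}$, $i=1,\ldots,n$, $k=1,\ldots,d_i$, $$d_{cop}(X_1,\ldots,X_n) = d_{cop}\big(g_1(X_1),\ldots,g_n(X_n)\big),$$ where $g_i(X_i):=(g_{i,1}(X_{i,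1}),\ldots,g_{i,d_i}(X_{i,d_i}))$.
   Context: The random variable $T_Y(Y,U)$ with $U$ uniform on $[0,1]$ independent of $Y$ is called the distributional transform of $Y$; for a random vector it is taken element-wise with independent uniform variables for each element. The ''elements'' of the random vector $X_i$ are its univariate coordinates $X_{i,k}$. *)

(* Defs.v *)
From HB Require Import structures.
From mathcomp Require Import all_boot all_order all_algebra.
From mathcomp Require Import all_classical all_reals all_analysis.
Set Implicit Arguments. Unset Strict Implicit. Unset Printing Implicit Defensive.
Import Order.TTheory GRing.Theory Num.Theory.
Local Open Scope classical_set_scope.
Local Open Scope ring_scope.

(* A family of random vectors X_1,...,X_n with X_i in R^{dd i} on a
   probability space (T,P) is represented by its coordinates
   X i k : T -> R  (i : 'I_n, k : 'I_(dd i)). *)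

Definition rvfam (R : realType) (T : Type) (n : nat) (dd : 'I_n -> nat) :=
  forall i : 'I_n, 'I_(dd i) -> T -> R.

Definition rvfam_meas (R : realType) (dsp : measure_display)
  (T : measurableType dsp) n (dd : 'I_n -> nat) (X : rvfam R T dd) :=
  forall i k, measurable_fun setT (X i k).

Definition dep_measure (R : realType) n (dd : 'I_n -> nat) :=
  forall (dsp : measure_display) (T : measurableType dsp),
    probability T R -> rvfam R T dd -> R.

(* The joint law of X under P evaluated on a measurable rectangle
   prod_{i,k} A i k; equality on all rectangles = equality of joint laws. *)
Definition same_law (R : realType) n (dd : 'I_n -> nat)
  (d1 : measure_display) (T1 : measurableType d1) (P1 : probability T1 R)
  (X1 : rvfam R T1 dd)
  (d2 : measure_display) (T2 : measurableType d2) (P2 : probability T2 R)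
  (X2 : rvfam R T2 dd) :=
  forall A : forall i : 'I_n, 'I_(dd i) -> set R,
    (forall i k, measurable (A i k)) ->
    P1 [set w | forall i k, A i k (X1 i k w)] =
    P2 [set w | forall i k, A i k (X2 i k w)].

Definition law_invariant (R : realType) n (dd : 'I_n -> nat)
  (d : dep_measure R dd) :=
  forall (d1 : measure_display) (T1 : measurableType d1) (P1 : probability T1 R)
    (X1 : rvfam R T1 dd)
    (d2 : measure_display) (T2 : measurableType d2) (P2 : probability T2 R)
    (X2 : rvfam R T2 dd),
    rvfam_meas X1 -> rvfam_meas X2 ->
    same_law P1 X1 P2 X2 -> d d1 T1 P1 X1 = d d2 T2 P2 X2.

Definition translation_invariant (R : realType) n (dd : 'I_n -> nat)
  (d : dep_measure R dd) :=
  forall (dsp : measure_display) (T : measurableType dsp) (P : probability T R)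
    (X : rvfam R T dd) (a : forall i : 'I_n, 'I_(dd i) -> R),
    rvfam_meas X ->
    d dsp T P (fun i k w => X i k w + a i k) = d dsp T P X.

Definition elementwise_symmetric (R : realType) n (dd : 'I_n -> nat)
  (d : dep_measure R dd) :=
  forall (dsp : measure_display) (T : measurableType dsp) (P : probability T R)
    (X : rvfam R T dd) (i0 : 'I_n) (k0 : 'I_(dd i0)),
    rvfam_meas X ->
    d dsp T P (fun i k w =>
      if (i == i0) && (val k == val k0) then - X i k w else X i k w) = d dsp T P X.

Definition dtransform (R : realType) (dsp : measure_display)
  (T : measurableType dsp) (P : probability T R) (Y : T -> R) (y u : R) : R :=
  fine (P [set w | Y w < y]) + u * fine (P [set w | Y w = y]).

Definition indep_uniforms_of (R : realType) (dsp : measure_display)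
  (T : measurableType dsp) (P : probability T R) n (dd : 'I_n -> nat)
  (X U : rvfam R T dd) :=
  forall A B : forall i : 'I_n, 'I_(dd i) -> set R,
    (forall i k, measurable (A i k)) -> (forall i k, measurable (B i k)) ->
    P [set w | forall i k, A i k (X i k w) /\ B i k (U i k w)] =
    (P [set w | forall i k, A i k (X i k w)] *
     \prod_(i < n) \prod_(k < dd i)
        (@lebesgue_measure R) (B i k `&` `[0%R, 1%R]%classic))%E.

Definition dist_transform (R : realType) (dsp : measure_display)
  (T : measurableType dsp) (P : probability T R) n (dd : 'I_n -> nat)
  (X U : rvfam R T dd) : rvfam R T dd :=
  fun i k w => dtransform P (X i k) (X i k w) (U i k w).

Definition d_cop (R : realType) n (dd : 'I_n -> nat) (d : dep_measure R dd)
  (dsp : measure_display) (T : measurableType dsp) (P : probability T R)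
  (X U : rvfam R T dd) : R :=
  d dsp T P (dist_transform P X U).

Definition strictly_monotone (R : realType) (g : R -> R) :=
  (forall x y, x < y -> g x < g y) \/ (forall x y, x < y -> g y < g x).

(* Main.v *)
Require Import Defs.
From HB Require Import structures.
From mathcomp Require Import all_boot all_order all_algebra.
From mathcomp Require Import all_classical all_reals all_analysis.
From mathcomp Require Import measurable_realfun lra ring.
Import Order.TTheory GRing.Theory Num.Theory.
Local Open Scope classical_set_scope.
Local Open Scope ring_scope.


Set Implicit Arguments.
Section dt.
Context (R : realType) (dsp : measure_display) (T : measurableType dsp)
  (P : probability T R).

Lemma mset (Y : T -> R) (hY : measurable_fun setT Y) (B : set R) :
  measurable B -> measurable [set w | B (Y w)].
Proof. by move=> mB; rewrite -[X in measurable X]setTI; exact: hY. Qed.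

Lemma finP {A : set T} : measurable A -> P A \is a fin_num.
Proof. by move=> mA; rewrite fin_num_measure. Qed.

Definition Fl (Y : T -> R) (y : R) := fine (P [set w | Y w < y]).
Definition Gl (Y : T -> R) (y : R) := fine (P [set w | Y w <= y]).

Lemma mlt (Y : T -> R) (hY : measurable_fun setT Y) y : measurable [set w | Y w < y].
Proof.
have -> : [set w | Y w < y] = setT `&` Y @^-1` `]-oo, y[.
  by apply/seteqP; split => w /=; rewrite in_itv /=; [move=> h; split|case].
exact: hY measurableT _ (measurable_itv _).
Qed.

Lemma mle (Y : T -> R) (hY : measurable_fun setT Y) y : measurable [set w | Y w <= y].
Proof.
have -> : [set w | Y w <= y] = setT `&` Y @^-1` `]-oo, y].
  by apply/seteqP; split => w /=; rewrite in_itv /=; [move=> h; split|case].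
exact: hY measurableT _ (measurable_itv _).
Qed.

Lemma meq (Y : T -> R) (hY : measurable_fun setT Y) y : measurable [set w | Y w = y].
Proof.
have -> : [set w | Y w = y] = setT `&` Y @^-1` [set y] by apply/seteqP; split => w /=; [move=> h; split|case].
exact: hY measurableT _ (measurable_set1 y).
Qed.

Lemma Fl_nd (Y : T -> R) (hY : measurable_fun setT Y) : {homo Fl Y : x y / x <= y}.
Proof.
move=> x y xy; rewrite /Fl; apply: fine_le; try (apply: finP; exact: (mlt hY)).
apply: le_measure; rewrite ?inE; try exact: (mlt hY).
by move=> w /= h; exact: lt_le_trans xy.
Qed.

Lemma Gl_nd (Y : T -> R) (hY : measurable_fun setT Y) : {homo Gl Y : x y / x <= y}.
Proof.
move=> x y xy; rewrite /Gl; apply: fine_le; try (apply: finP; exact: (mle hY)).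
apply: le_measure; rewrite ?inE; try exact: (mle hY).
by move=> w /= h; exact: le_trans xy.
Qed.

Lemma Ple (Y : T -> R) (hY : measurable_fun setT Y) y :
  P [set w | Y w <= y] = (P [set w | (Y w < y)%R] + P [set w | Y w = y])%E.
Proof.
have m1 := mlt hY y; have m2 := meq hY y.
rewrite -measureU //; last first.
  by apply/seteqP; split => w //= [h1 h2]; rewrite h2 ltxx in h1.
congr (P _); apply/seteqP; split => w /=.
  by rewrite le_eqVlt => /orP[/eqP ->|->]; [right|left].
by case=> [/ltW|->].
Qed.

Lemma dtE (Y : T -> R) (hY : measurable_fun setT Y) y u :
  dtransform P Y y u = Fl Y y + u * (Gl Y y - Fl Y y).
Proof.
have m1 := finP (mlt hY y); have m2 := finP (meq hY y).
rewrite /dtransform /Gl /Fl Ple // fineD //.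
by congr (_ + _ * _); rewrite addrC addKr.
Qed.

Lemma mdt d' (S : measurableType d') (Y : T -> R) (hY : measurable_fun setT Y)
  (f1 f2 : S -> R) : measurable_fun setT f1 -> measurable_fun setT f2 ->
  measurable_fun setT (fun s => dtransform P Y (f1 s) (f2 s)).
Proof.
move=> m1 m2.
have -> : (fun s => dtransform P Y (f1 s) (f2 s)) =
  (Fl Y \o f1) \+ f2 \* ((Gl Y \o f1) \- (Fl Y \o f1)).
  by apply/funext => s; rewrite dtE.
have mF : measurable_fun setT (Fl Y) by apply: nondecreasing_measurable => //; exact: Fl_nd.
have mG : measurable_fun setT (Gl Y) by apply: nondecreasing_measurable => //; exact: Gl_nd.
apply: measurable_funD; first exact: measurableT_comp.
apply: measurable_funM => //.
by apply: measurable_funB; exact: measurableT_comp.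
Qed.

Lemma dt_inc (Y : T -> R) (g : R -> R) (hg : forall x y, x < y -> g x < g y) y u :
  dtransform P (fun w => g (Y w)) (g y) u = dtransform P Y y u.
Proof.
have lt a b : (g a < g b) = (a < b).
  case: (ltgtP a b) => h; first exact: hg.
    by apply/negbTE; rewrite -leNgt ltW // hg.
  by rewrite h ltxx.
have eq a b : (g a = g b) <-> (a = b).
  split=> [|->//] e; case: (ltgtP a b) => // h; have := hg _ _ h; by rewrite e ltxx.
rewrite /dtransform.
have -> : [set w | g (Y w) < g y] = [set w | Y w < y].
  by apply/seteqP; split => w /=; rewrite lt.
have -> : [set w | g (Y w) = g y] = [set w | Y w = y].
  by apply/seteqP; split => w /= /eq.
by [].
Qed.

Lemma dt_dec (Y : T -> R) (hY : measurable_fun setT Y) (g : R -> R)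
  (hg : forall x y, x < y -> g y < g x) y u :
  dtransform P (fun w => g (Y w)) (g y) u = 1 - dtransform P Y y (1 - u).
Proof.
have lt a b : (g a < g b) = (b < a).
  case: (ltgtP a b) => h.
    by apply/negbTE; rewrite -leNgt ltW // hg.
    exact: hg.
  by rewrite h ltxx.
have eq a b : (g a = g b) <-> (a = b).
  split=> [|->//] e; case: (ltgtP a b) => // h; have := hg _ _ h; by rewrite e ltxx.
rewrite /dtransform.
have -> : [set w | g (Y w) < g y] = ~` [set w | Y w <= y].
  by apply/seteqP; split => w /=; rewrite lt ltNge => /negP.
have -> : [set w | g (Y w) = g y] = [set w | Y w = y].
  by apply/seteqP; split => w /= /eq.
have m1 := mle hY y; have m2 := mlt hY y; have m3 := meq hY y.
have f1 := finP m1; have f2 := finP m2; have f3 := finP m3.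
rewrite probability_setC // fineB //.
rewrite Ple // fineD //=. lra.
Qed.

End dt.

Set Implicit Arguments.

Section refl.
Context (R : realType).
Lemma leb_refl (S : set R) : measurable S ->
  (@lebesgue_measure R) [set u | S (1 - u)] = (@lebesgue_measure R) S.
Proof.
move=> mS.
have mf : measurable_fun setT (fun u : R => 1 - u).
  by apply: measurable_funB => //; exact: measurable_cst.
have := @lebesgue_measure_unique R (pushforward (@lebesgue_measure R) ((fun u : R => 1 - u) : measurableTypeR R -> measurableTypeR R)).
move=> /(_ mf) h.
suff hoc : forall X : set R, ocitv X -> (@lebesgue_measure R) X =
    pushforward (@lebesgue_measure R) (fun u : R => 1 - u) X.
  by rewrite (h hoc S mS).
move=> _ [[a b] _ <-]; rewrite /pushforward.
have -> : (fun u : R => 1 - u) @^-1` `]a, b]%classic = `[1 - b, 1 - a[%classic.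
  apply/seteqP; split => x /=; rewrite !in_itv /= => /andP[k1 k2]; apply/andP; split; lra.
rewrite !lebesgue_measure_itv /= !lte_fin.
have -> : (1 - b < 1 - a) = (a < b) by apply/idP/idP => hh; lra.
case: ifP => // _; rewrite -!EFinD.
by congr EFin; ring.
Qed.
End refl.

Set Implicit Arguments.

Definition Zb (R : realType) n (dd : 'I_n -> nat) := {i : 'I_n & 'I_(dd i)} -> (R * R)%type.
HB.instance Definition _ (R : realType) n (dd : 'I_n -> nat) := gen_eqMixin (Zb R dd).
HB.instance Definition _ (R : realType) n (dd : 'I_n -> nat) := gen_choiceMixin (Zb R dd).
HB.instance Definition _ (R : realType) n (dd : 'I_n -> nat) := isPointed.Build (Zb R dd) (fun _ => (0,0)).

Definition rectK (R : realType) n (dd : 'I_n -> nat) (A B : {i : 'I_n & 'I_(dd i)} -> set R) : set (Zb R dd) :=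
  [set z | forall p, A p (z p).1 /\ B p (z p).2].
Definition GK (R : realType) n (dd : 'I_n -> nat) : set (set (Zb R dd)) :=
  [set S | exists A B : {i : 'I_n & 'I_(dd i)} -> set R,
    [/\ (forall p, measurable (A p)), (forall p, measurable (B p)) & S = rectK A B]].

Lemma meas_forallK d (S : measurableType d) n (dd : 'I_n -> nat)
  (F : {i : 'I_n & 'I_(dd i)} -> set S) :
  (forall p, measurable (F p)) -> measurable [set w | forall p, F p w].
Proof.
move=> mF.
have -> : [set w | forall p, F p w] = \bigcap_(p in [set: {i : 'I_n & 'I_(dd i)}]) F p.
  by apply/seteqP; split => w /= h p //; exact: h.
by apply: fin_bigcap_measurable => //; exact: finite_finset.
Qed.

Lemma msetG d (S : measurableType d) (R : realType) (Y : S -> R) (hY : measurable_fun setT Y) (B : set R) :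
  measurable B -> measurable [set w | B (Y w)].
Proof. by move=> mB; rewrite -[X in measurable X]setTI; exact: hY. Qed.

Lemma forallK n (dd : 'I_n -> nat) (Q : {i : 'I_n & 'I_(dd i)} -> Prop) :
  (forall p, Q p) <-> (forall (i : 'I_n) (k : 'I_(dd i)), Q (Tagged (fun i => 'I_(dd i)) k)).
Proof. by split => [h i k|h [i k]]; [exact: h|exact: h]. Qed.

Unset Implicit Arguments.
Section law.
Context (R : realType) (n : nat) (dd : 'I_n -> nat) (dsp : measure_display)
  (T : measurableType dsp) (P : probability T R) (X U : rvfam R T dd)
  (hX : rvfam_meas X) (hU : rvfam_meas U) (hXU : indep_uniforms_of P X U)
  (c : forall i : 'I_n, 'I_(dd i) -> bool).

Local Notation K := {i : 'I_n & 'I_(dd i)}.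
Local Notation Z := (g_sigma_algebraType (@GK R n dd)).

Definition Phi (V : rvfam R T dd) : T -> Z :=
  fun (w : T) (p : K) => (X (tag p) (tagged p) w, V (tag p) (tagged p) w).

Lemma mPhi V (hV : rvfam_meas V) : measurable_fun setT (Phi V).
Proof.
have h := @measurability _ _ T Z setT (Phi V) (@GK R n dd) erefl. apply: h.
move=> _ [_ [A [B [mA mB ->]]] <-]; rewrite setTI.
apply: meas_forallK => p; apply: measurableI.
  exact: (msetG (hX _ _)).
exact: (msetG (hV _ _)).
Qed.


Definition U' : rvfam R T dd := fun i k w => if c i k then 1 - U i k w else U i k w.

Lemma mU' : rvfam_meas U'.
Proof.
move=> i k; rewrite /U'; case: (c i k); last exact: hU.
by apply: measurable_funB => //; exact: measurable_cst.
Qed.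

Lemma itv01E (u : R) : (`[0%R, 1%R]%classic : set R) u = (0 <= u <= 1).
Proof. by rewrite /= in_itv. Qed.

Lemma rect_eq (A B : K -> set R) : (forall p, measurable (A p)) -> (forall p, measurable (B p)) ->
  pushforward P (Phi U) (rectK A B) = pushforward P (Phi U') (rectK A B).
Proof.
move=> mA mB; rewrite /pushforward.
set B' := fun (i : 'I_n) (k : 'I_(dd i)) =>
  if c i k then [set u | B (Tagged (fun i => 'I_(dd i)) k) (1 - u)] else B (Tagged (fun i => 'I_(dd i)) k).
have mB' : forall i k, measurable (B' i k).
  move=> i k; rewrite /B'; case: (c i k); last exact: mB.
  apply: (@msetG _ R R (fun u => 1 - u)) => //.
  by apply: measurable_funB => //; exact: measurable_cst.
have mA' : forall (i : 'I_n) (k : 'I_(dd i)), measurable (A (Tagged (fun i => 'I_(dd i)) k)) by move=> *; exact: mA.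
have mB2 : forall (i : 'I_n) (k : 'I_(dd i)), measurable (B (Tagged (fun i => 'I_(dd i)) k)) by move=> *; exact: mB.
have -> : Phi U @^-1` rectK A B = [set w | forall i k,
    A (Tagged (fun i => 'I_(dd i)) k) (X i k w) /\ B (Tagged (fun i => 'I_(dd i)) k) (U i k w)].
  apply/seteqP; split => w /=; rewrite /rectK /Phi /= => h.
    by move=> i k; exact: (h (Tagged (fun i => 'I_(dd i)) k)).
  by case=> i k; exact: h.
have -> : Phi U' @^-1` rectK A B = [set w | forall i k,
    A (Tagged (fun i => 'I_(dd i)) k) (X i k w) /\ B' i k (U i k w)].
  apply/seteqP; split => w /=; rewrite /rectK /Phi /= /B' /U' => h.
    by move=> i k; have := h (Tagged (fun i => 'I_(dd i)) k); case: (c i k).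
  by case=> i k /=; have := h i k; case: (c i k).
rewrite (hXU _ _ mA' mB2) (hXU _ _ mA' mB'); congr (_ * _)%E.
apply: eq_bigr => i _; apply: eq_bigr => k _.
rewrite /B'; case: (c i k) => //.
rewrite -leb_refl; last by apply: measurableI => //; exact: measurable_itv.
congr (lebesgue_measure _); apply/seteqP; split => u /=; rewrite !in_itv /=.
  by move=> [h /andP[h1 h2]]; split => //; apply/andP; split; lra.
by move=> [h /andP[h1 h2]]; split => //; apply/andP; split; lra.
Qed.


Lemma mproj1 (p : K) : measurable_fun setT (fun z : Z => (z p).1).
Proof.
move=> _ B mB; rewrite setTI; apply: sub_sigma_algebra.
exists (fun q => if q == p then B else setT), (fun _ => setT); split.
- by move=> q; case: ifP.
- by [].
apply/seteqP; split => z /=.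
  by move=> h q; case: eqP => [->|_]; split.
by move=> h; have [] := h p; rewrite eqxx.
Qed.

Lemma mproj2 (p : K) : measurable_fun setT (fun z : Z => (z p).2).
Proof.
move=> _ B mB; rewrite setTI; apply: sub_sigma_algebra.
exists (fun _ => setT), (fun q => if q == p then B else setT); split.
- by [].
- by move=> q; case: ifP.
apply/seteqP; split => z /=.
  by move=> h q; case: eqP => [->|_]; split.
by move=> h; have [] := h p; rewrite eqxx.
Qed.

Lemma law_flip (A : forall i, 'I_(dd i) -> set R) : (forall i k, measurable (A i k)) ->
  P [set w | forall i k, A i k (dtransform P (X i k) (X i k w) (U i k w))] =
  P [set w | forall i k, A i k (dtransform P (X i k) (X i k w) (U' i k w))].
Proof.
move=> mA.
set E : set Z := [set z | forall p : K, A (tag p) (tagged p)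
  (dtransform P (X (tag p) (tagged p)) (z p).1 (z p).2)].
have mE : measurable E.
  apply: meas_forallK => p; apply: msetG; last exact: mA.
  apply: mdt; [exact: hX|exact: mproj1|exact: mproj2].
have sI : setI_closed (@GK R n dd).
  move=> _ _ [A1 [B1 [mA1 mB1 ->]]] [A2 [B2 [mA2 mB2 ->]]].
  exists (fun p => A1 p `&` A2 p), (fun p => B1 p `&` B2 p); split.
  - by move=> p; apply: measurableI.
  - by move=> p; apply: measurableI.
  apply/seteqP; split => z /=.
    by move=> [h1 h2] p; case: (h1 p) (h2 p) => ? ? [? ?].
  by move=> h; split => p; have [[? ?] [? ?]] := h p.
have Gg : forall k : nat, (@GK R n dd) ((fun _ => setT) k).
  move=> _; exists (fun _ => setT), (fun _ => setT); split => //.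
  by apply/seteqP; split => z.
have cov : \bigcup_(k : nat) ((fun _ : nat => [set: Z]) k) = [set: Z].
  by apply/seteqP; split => z // _; exists 0%N.
have := @measure_unique _ R Z (@GK R n dd) (fun _ => setT) erefl sI Gg cov
  (pushforward P (Phi U)) (pushforward P (Phi U')).
move=> /(_ (mPhi U hU) (mPhi U' mU')) h.
have e : pushforward P (Phi U) E = pushforward P (Phi U') E.
  apply: h => //.
  - by move=> _ [A1 [B1 [mA1 mB1 ->]]]; exact: rect_eq.
  - move=> _; rewrite /pushforward /=; apply: (le_lt_trans (probability_le1 P _)); last exact: ltry.
    by rewrite -[X in measurable X]setTI; exact: (mPhi U hU measurableT _ measurableT).
move: e; rewrite /pushforward.
have eqs : forall V : rvfam R T dd, Phi V @^-1` E =
    [set w | forall i k, A i k (dtransform P (X i k) (X i k w) (V i k w))].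
  move=> V; apply/seteqP; split => w /= hw.
    by move=> i k; exact: (hw (Tagged (fun i => 'I_(dd i)) k)).
  by case=> i k; exact: hw.
by rewrite !eqs.
Qed.

End law.


Lemma rvfam_ext (R : realType) (T : Type) n (dd : 'I_n -> nat) (Y1 Y2 : rvfam R T dd) :
  (forall i k w, Y1 i k w = Y2 i k w) -> Y1 = Y2.
Proof.
move=> h; apply: functional_extensionality_dep => i.
by apply/funext => k; apply/funext => w; exact: h.
Qed.

Lemma tagE n (dd : 'I_n -> nat) (i : 'I_n) (k : 'I_(dd i)) (p : {i : 'I_n & 'I_(dd i)}) :
  ((i == tag p) && (val k == val (tagged p))) = (Tagged (fun i => 'I_(dd i)) k == p).
Proof.
case: p => i0 k0 /=; apply/idP/idP.
  by move=> /andP[/eqP ei ek]; subst i0; rewrite (ord_inj (eqP ek)).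
move=> /eqP h; apply/andP; split; apply/eqP.
  exact: (congr1 tag h).
exact: (congr1 (fun q : {i : 'I_n & 'I_(dd i)} => nat_of_ord (tagged q)) h).
Qed.

Lemma flip_list (R : realType) n (dd : 'I_n -> nat) (d : dep_measure R dd)
  (hsym : elementwise_symmetric d) (dsp : measure_display) (T : measurableType dsp)
  (P : probability T R) (s : seq {i : 'I_n & 'I_(dd i)}) (Y : rvfam R T dd) (hY : rvfam_meas Y) :
  d dsp T P (fun i k w => if Tagged (fun i => 'I_(dd i)) k \in s then - Y i k w else Y i k w)
  = d dsp T P Y.
Proof.
elim: s => [|p s IH].
  by congr (d dsp T P _); apply: rvfam_ext => i k w; rewrite in_nil.
have mY1 : rvfam_meas (fun i k w => if Tagged (fun i => 'I_(dd i)) k \in s then - Y i k w else Y i k w).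
  move=> i k; case: (Tagged (fun i => 'I_(dd i)) k \in s); last exact: hY.
  exact: measurable_funN.
case: (boolP (p \in s)) => ps.
  rewrite -IH; congr (d dsp T P _); apply: rvfam_ext => i k w.
  by rewrite in_cons; case: eqP => [->|]; rewrite ?ps.
rewrite -IH -(hsym dsp T P _ (tag p) (tagged p) mY1).
congr (d dsp T P _); apply: rvfam_ext => i k w.
rewrite tagE in_cons; case: eqP => [e|] //=.
by rewrite e (negbTE ps).
Qed.

Theorem mainTheorem2 (R : realType) (n : nat) (dd : 'I_n -> nat)
  (d : dep_measure R dd)
  (hn : (2 <= n)%N)
  (hlaw : law_invariant d) (htrans : translation_invariant d)
  (hsym : elementwise_symmetric d)
  (dsp : measure_display) (T : measurableType dsp) (P : probability T R)
  (X U : rvfam R T dd)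
  (hX : rvfam_meas X) (hU : rvfam_meas U)
  (hXU : indep_uniforms_of P X U)
  (g : forall i : 'I_n, 'I_(dd i) -> R -> R)
  (hg : forall i k, strictly_monotone (g i k)) :
  d_cop d P X U = d_cop d P (fun i k w => g i k (X i k w)) U.
Proof.
pose c i k := `[< forall x y : R, x < y -> g i k y < g i k x >].
have hdec : forall i k, c i k -> forall x y, x < y -> g i k y < g i k x.
  by move=> i k /asboolP.
have hinc : forall i k, ~~ c i k -> forall x y, x < y -> g i k x < g i k y.
  move=> i k /asboolPn nd; case: (hg i k) => // hd; exfalso; exact: nd.
pose U1 := U' R n dd dsp T U c.
pose V' : rvfam R T dd := fun i k w => dtransform P (X i k) (X i k w) (U1 i k w).
have mV' : rvfam_meas V'.
  by move=> i k; apply: mdt; [exact: hX|exact: hX|exact: mU'].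
have mV : rvfam_meas (dist_transform P X U).
  by move=> i k; apply: mdt; [exact: hX|exact: hX|exact: hU].
pose s := [seq p <- enum [set: {i : 'I_n & 'I_(dd i)}] | c (tag p) (tagged p)].
have memE : forall i (k : 'I_(dd i)), (Tagged (fun i => 'I_(dd i)) k \in s) = c i k.
  by move=> i k; rewrite mem_filter mem_enum in_setT andbT.
pose W : rvfam R T dd := fun i k w => if Tagged (fun i => 'I_(dd i)) k \in s then - V' i k w else V' i k w.
have mW : rvfam_meas W.
  move=> i k; rewrite /W; case: (Tagged (fun i => 'I_(dd i)) k \in s); last exact: mV'.
  exact: measurable_funN.
have eqW : dist_transform P (fun i k w => g i k (X i k w)) U =
    (fun i k w => W i k w + (if c i k then 1 else 0)).
  apply: rvfam_ext => i k w; rewrite /W memE /dist_transform /V' /U1 /U'.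
  case E: (c i k).
    by rewrite (dt_dec P (hX i k) (g i k) (hdec i k E)) addrC.
  by rewrite (@dt_inc _ _ _ P (X i k) (g i k) (hinc i k (negbT E))) addr0.
rewrite /d_cop eqW (htrans dsp T P W (fun i k => if c i k then 1 else 0) mW).
rewrite /W flip_list //.
apply: hlaw => //.
move=> A mA; exact: (law_flip _ _ _ _ _ P X U hX hU hXU c A mA).
Qed.
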